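(* For every integer $k\ge 1$, the number of unlabeled connected $k$-vertex graphs with at most $k-1+\frac{k}{\ln k}$ edges is less than $100^k$.
   Context: Graphs are finite and simple; unlabeled means counted up to isomorphism. For $k=1$ the quantity $k/\ln k$ is interpreted as imposing no constraint beyond $k-1=0$ edges (the only graph is the single vertex). *)

(* Defs.v *)
From Stdlib Require Import Reals.
From mathcomp Require Import all_boot all_order fingroup perm.
Set Implicit Arguments. Unset Strict Implicit. Unset Printing Implicit Defensive.

Definition graph (k : nat) := {set {set 'I_k}}.

Definition simple_graph k (E : graph k) : bool :=
  [forall e in E, #|e| == 2].

Definition adj k (E : graph k) : rel 'I_k :=
  fun x y => (x != y) && ([set x; y] \in E).

Definition connectedb k (E : graph k) : bool :=
  [forall x, forall y, connect (adj E) x y].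

Definition isob k (E1 E2 : graph k) : bool :=
  [exists s : {perm 'I_k}, E2 == [set [set s x | x in e] | e : {set 'I_k} in E1]].

(* Edge bound m <= k - 1 + k / ln k ; for k = 1 it means m <= 0 = k - 1. *)
Definition edge_bound_ok (k m : nat) : bool :=
  if (k <= 1)%N then (m <= k - 1)%N
  else if Rle_dec (INR m) (Rplus (INR (k - 1)) (Rdiv (INR k) (ln (INR k))))
       then true else false.

Definition good k (E : graph k) : bool :=
  [&& simple_graph E, connectedb E & edge_bound_ok k #|E|].

Definition num_unlabeled_good (k : nat) : nat :=
  #|[set [set H : graph k | isob G H] | G : graph k in [pred G | good G]]|.

(* Main.v *)
Require Import Defs.
From Stdlib Require Import Reals Lra.
From mathcomp Require Import all_boot all_order fingroup perm zify.

Set Implicit Arguments. Unset Strict Implicit. Unset Printing Implicit Defensive.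



Section Iso.
Variable k : nat.
Definition act (s : {perm 'I_k}) (E : graph k) : graph k :=
  [set [set s x | x in e] | e : {set 'I_k} in E].

Lemma act1 E : act 1 E = E.
Proof.
rewrite /act -[RHS]imset_id; apply: eq_imset => e.
by rewrite -[RHS]imset_id; apply: eq_imset => x; rewrite perm1.
Qed.

Lemma actM s t E : act (s * t)%g E = act t (act s E).
Proof.
rewrite /act -imset_comp; apply: eq_imset => e /=.
by rewrite -imset_comp; apply: eq_imset => x /=; rewrite permM.
Qed.

Lemma isobP (E1 E2 : graph k) : reflect (exists s, E2 = act s E1) (isob E1 E2).
Proof.
apply: (iffP existsP) => [[s /eqP ->]|[s ->]]; by exists s.
Qed.

Lemma isob_class (E D : graph k) : isob E D -> [set H | isob E H] = [set H | isob D H].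
Proof.
move=> /isobP [s ->]; apply/setP => H; rewrite !inE.
apply/isobP/isobP => [[t ->]|[t ->]].
  by exists (s^-1 * t)%g; rewrite actM -(actM s) mulgV act1.
by exists (s * t)%g; rewrite actM.
Qed.
End Iso.



Section BFS.
Variable k : nat.
Variable G : graph k.

Lemma crossing (A : {set 'I_k}) x y : x \in A -> y \notin A ->
  connect (adj G) x y -> exists a b, [/\ a \in A, b \notin A & adj G a b].
Proof.
move=> xA yA /connectP [p pth yeq]; rewrite yeq in yA; clear yeq.
elim: p x xA pth yA => [|z p IH] x xA /= => [_|/andP [axz pth]] yA.
  by rewrite xA in yA.
case zA: (z \in A); first exact: IH zA pth yA.
by exists x, z; rewrite zA.
Qed.

Definition bfs_inv n (w : nat -> 'I_k) (p : nat -> nat) :=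
  [/\ 0 < n, p 0 = 0, (forall i j, i < n -> j < n -> w i = w j -> i = j),
   (forall j, 0 < j < n -> p j < j /\ adj G (w (p j)) (w j)) &
   ((forall i j, 0 < i -> i <= j -> j < n -> p i <= p j) /\
    (forall i y, i < p n.-1 -> adj G (w i) y -> exists2 j, j < n & w j = y))].

Lemma inv_step n w p : connectedb G -> n < k -> bfs_inv n w p ->
  exists w' p', bfs_inv n.+1 w' p'.
Proof.
rewrite /bfs_inv; move=> conn ltnk [n0 p0 winj par [mono cl]].
pose A := [set y | [exists i : 'I_n, w i == y]].
have memA y : reflect (exists2 j, j < n & w j = y) (y \in A).
  rewrite inE; apply: (iffP existsP) => [[i /eqP <-]|[j jn <-]].
    by exists i.
  by exists (Ordinal jn).
have cardA : #|A| = n.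
  have -> : A = [set w (nat_of_ord i) | i : 'I_n].
    apply/setP => y; rewrite inE; apply/existsP/imsetP => [[i /eqP <-]|[i _ ->]];
    by exists i.
  rewrite card_in_imset ?card_ord // => i j _ _ /winj H.
  by apply/val_inj/H.
have [y yA] : exists y, y \notin A.
  apply/existsP; rewrite -negb_forall; apply/negP => /forallP allA.
  have : #|A| = #|'I_k| by apply/eqP; rewrite eqn_leq max_card /= ; apply/subset_leq_card/subsetP => z _; apply: allA.
  by rewrite cardA card_ord => E; rewrite E ltnn in ltnk.
have w0A : w 0 \in A by apply/memA; exists 0.
have [a [b [aA bA ab]]] := crossing w0A yA ((forallP ((forallP conn) (w 0))) y).
pose P i := (i < n) && [exists b, adj G (w i) b && (b \notin A)].
have exP : exists i, P i.
  move/memA: aA => [i ilt wia]; rewrite -wia in ab; exists i; rewrite /P ilt /=.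
  by apply/existsP; exists b; rewrite ab bA.
pose q := ex_minn exP.
have [Pq qmin] : P q /\ (forall i, P i -> q <= i).
  by rewrite /q; case: ex_minnP.
move: Pq => /andP [qn /existsP [c /andP [qc cA]]].
exists (fun i => if i == n then c else w i), (fun i => if i == n then q else p i).
split.
- by [].
- by rewrite (ltn_eqF n0).
- move=> i j; rewrite !ltnS => ilen jlen.
  case: (eqVneq i n) => [->|ine]; case: (eqVneq j n) => [->|jne];
    rewrite ?eqxx ?(negbTE ine) ?(negbTE jne) //.
  + move=> E; have jn : j < n by rewrite ltn_neqAle jne jlen.
    by case/negP: cA; apply/memA; exists j; rewrite // E.
  + move=> E; have iN : i < n by rewrite ltn_neqAle ine ilen.
    by case/negP: cA; apply/memA; exists i; rewrite // E.
  + apply: winj; [by rewrite ltn_neqAle ine ilen|by rewrite ltn_neqAle jne jlen].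
- move=> j /andP [j0]; rewrite ltnS leq_eqVlt => /orP [/eqP ->|jn].
  + by rewrite eqxx (ltn_eqF qn); split.
  + have := par j; rewrite j0 jn => /(_ isT) [pj adjj].
    by rewrite (ltn_eqF jn) (ltn_eqF (ltn_trans pj jn)).
split.
- move=> i j i0 ij; rewrite ltnS leq_eqVlt => /orP [/eqP jn|jn].
  + move: ij; rewrite jn eqxx => ij.
    case: (eqVneq i n) => [_|ine]; first by [].
    have iltn : i < n by rewrite ltn_neqAle ine ij.
    apply: (@leq_trans (p n.-1)).
      apply: mono => //; last by rewrite ltn_predL.
      by rewrite -ltnS prednK.
    rewrite leqNgt; apply/negP => qlt.
    have [j0 jlt wj] := cl _ _ qlt qc.
    by case/negP: cA; apply/memA; exists j0.
  + rewrite (ltn_eqF jn) (ltn_eqF (leq_ltn_trans ij jn)); exact: mono.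
- move=> i z /=; rewrite eqxx => iq.
  have iltn : i < n := ltn_trans iq qn.
  rewrite (ltn_eqF iltn) => iz.
  case zA: (z \in A).
    move/memA: zA => [j jn wj]; exists j; first by rewrite ltnS ltnW.
    by rewrite (ltn_eqF jn).
  have : P i by rewrite /P iltn; apply/existsP; exists z; rewrite iz zA.
  by move/qmin; rewrite leqNgt iq.
Qed.
End BFS.



Lemma bfs_exists k (G : graph k) (x0 : 'I_k) : connectedb G ->
  exists w p, bfs_inv G k w p.
Proof.
move=> conn.
have H : forall m, m < k -> exists w p, bfs_inv G m.+1 w p.
  elim=> [_|m IH mk].
    exists (fun _ => x0), (fun _ => 0); split => //.
    - by move=> i j; rewrite !ltnS !leqn0 => /eqP -> /eqP ->.
    - by move=> j /andP [j0 j1]; move: j1; rewrite ltnS leqNgt j0.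
  have [w [p I]] := IH (ltnW mk).
  exact: inv_step conn mk I.
have k0 : 0 < k by case: k x0 {G conn H} => [[]|].
by move: (H k.-1); rewrite prednK //; apply.
Qed.

Lemma imset_set2' (T U : finType) (f : T -> U) a b :
  [set f x | x in [set a; b]] = [set f a; f b].
Proof. by rewrite imsetU1 imset_set1. Qed.

Lemma canon n (G : graph n.+1) : connectedb G -> exists s p,
 (forall j, 0 < j < n.+1 -> p j < j /\ [set inord (p j); inord j] \in act s G) /\
 (forall i j, 0 < i -> i <= j -> j < n.+1 -> p i <= p j).
Proof.
move=> conn.
have [w [p [n0 p0 winj par [mono _]]]] := bfs_exists ord0 conn.
pose W := fun i : 'I_n.+1 => w i.
have injW : injective W.
  by move=> i j /winj H; apply/val_inj/H.
pose pi := perm injW.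
have sw i : i < n.+1 -> (pi^-1)%g (w i) = inord i.
  move=> ilt; apply: (@perm_inj _ pi); rewrite permKV permE /W inordK //.
exists (pi^-1)%g, p; split => // j jr.
have [pj /andP [_ e]] := par j jr.
split => //.
apply/imsetP; exists [set w (p j); w j] => //.
have jlt : j < n.+1 by case/andP: jr.
by rewrite imset_set2' !sw // (ltn_trans pj jlt).
Qed.



Section Tree.
Variable n : nat.
Notation K := n.+1.
Notation V := 'I_(n + n).+2.

Definition rk (S : {set V}) (v : V) := #|[set s in S | (s <= v)%N]|.
Definition tree (S : {set V}) : graph K :=
  [set [set (inord (v - rk S v) : 'I_K); inord (rk S v)] | v : V in S].

Lemma card_upto j : j < K -> #|[set j' : 'I_K | 0 < j' <= j]| = j.
Proof.
move=> jK.
have -> : [set j' : 'I_K | 0 < j' <= j] = [set (inord i.+1 : 'I_K) | i : 'I_j].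
  apply/setP => x; rewrite inE; apply/idP/imsetP => [/andP [x0 xj]|[i _ ->]].
    have xm : x.-1 < j by lia.
    exists (Ordinal xm) => //; apply/val_inj; rewrite /= inordK; lia.
  have li := ltn_ord i; rewrite inordK; lia.
rewrite card_imset ?card_ord // => a b /(congr1 val) /=.
have la := ltn_ord a; have lb := ltn_ord b; rewrite !inordK; try lia.
by case => /val_inj.
Qed.

Variable p : nat -> nat.
Hypothesis par : forall j, 0 < j < K -> p j < j.
Hypothesis mono : forall i j, 0 < i -> i <= j -> j < K -> p i <= p j.

Lemma nz (j : 'I_K) : (j \in [set~ ord0]) = (0 < j).
Proof. by rewrite !inE lt0n. Qed.

Definition g (j : 'I_K) : V := inord (p j + j).
Definition S0 : {set V} := [set g j | j in [set~ ord0]].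

Lemma gK (j : 'I_K) : 0 < j -> (g j : nat) = p j + j.
Proof.
move=> j0; have pj : p j < j by apply: par; rewrite j0 ltn_ord.
have lj := ltn_ord j; rewrite /g inordK; lia.
Qed.

Lemma g_le (a b : 'I_K) : 0 < a -> 0 < b -> (g a <= g b) = (a <= b).
Proof.
move=> a0 b0; rewrite !gK //.
have la := ltn_ord a; have lb := ltn_ord b.
case: (leqP a b) => ab.
  have := mono a0 ab lb; lia.
have := mono b0 (ltnW ab) la; lia.
Qed.

Lemma rk_g (j : 'I_K) : 0 < j -> rk S0 (g j) = j.
Proof.
move=> j0; rewrite /rk.
have -> : [set s in S0 | (s <= g j)%N] = [set g j' | j' in [set j' : 'I_K | 0 < j' <= j]].
  apply/setP => s; rewrite inE; apply/andP/imsetP.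
    case=> /imsetP [j' j'0 ->]; rewrite nz in j'0; rewrite g_le // => jj.
    by exists j'; rewrite // inE j'0.
  case=> j' ; rewrite inE => /andP [j'0 j'j] ->; split; first by apply/imsetP; exists j'; rewrite // nz.
  by rewrite g_le.
rewrite card_in_imset ?card_upto // => a b; rewrite !inE => /andP [a0 _] /andP [b0 _] E.
by apply/val_inj/eqP; rewrite eqn_leq -!g_le // E leqnn.
Qed.

Lemma tree_S0 : tree S0 = [set [set (inord (p j) : 'I_K); j] | j : 'I_K in [set~ ord0]].
Proof.
apply/setP => e; apply/imsetP/imsetP => [[v /imsetP [j j0 ->] ->]|[j j0 ->]].
  rewrite nz in j0.
  by exists j; rewrite ?nz // rk_g // gK // addnK inord_val.
have j0' : 0 < j by rewrite nz in j0.
exists (g j); first by apply/imsetP; exists j.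
by rewrite rk_g // gK // addnK inord_val.
Qed.

Lemma card_tree_S0 : #|tree S0| = n.
Proof.
rewrite tree_S0 card_in_imset ?cardsC1 ?card_ord // => a b.
rewrite !nz => a0 b0 E.
have ha := ltn_ord a; have hb := ltn_ord b.
have pa : p a < a by apply: par; rewrite a0 ha.
have pb : p b < b by apply: par; rewrite b0 hb.
have inA : (inord (p a) : 'I_K) < a by rewrite inordK; lia.
have inB : (inord (p b) : 'I_K) < b by rewrite inordK; lia.
have : a \in [set (inord (p b) : 'I_K); b] by rewrite -E !inE eqxx orbT.
have : b \in [set (inord (p a) : 'I_K); a] by rewrite E !inE eqxx orbT.
rewrite !inE => /orP [/eqP eb|/eqP //] /orP [/eqP ea|/eqP //].
move: inA inB; rewrite -eb -ea; lia.
Qed.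
End Tree.



Section Extra.
Variable n M : nat.
Notation K := n.+1.

Definition extra (t : {ffun 'I_M -> 'I_K * 'I_K}) : graph K :=
  [set [set (t i).1; (t i).2] | i in [pred i | (t i).1 != (t i).2]].

Definition pr (e : {set 'I_K}) : 'I_K * 'I_K := (nth ord0 (enum e) 0, nth ord0 (enum e) 1).

Lemma pr_ok (e : {set 'I_K}) : #|e| = 2 -> (pr e).1 != (pr e).2 /\ [set (pr e).1; (pr e).2] = e.
Proof.
move=> c2; have := enum_uniq e; have : size (enum e) = 2 by rewrite -cardE.
rewrite /pr; case E: (enum e) => [|a [|b [|]]] //= _.
rewrite andbT inE => ab; split => //.
by apply/setP => x; rewrite -(mem_enum e) E !inE.
Qed.

Lemma extra_exists (X : graph K) : (forall e, e \in X -> #|e| = 2) -> #|X| <= M ->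
  exists t, extra t = X.
Proof.
move=> X2 XM.
exists [ffun i : 'I_M => if i < #|X| then pr (nth set0 (enum X) i) else (ord0, ord0)].
apply/setP => e; apply/imsetP/idP.
  case=> i; rewrite inE ffunE; case: ltnP => iX; last by rewrite eqxx.
  have eX : nth set0 (enum X) i \in X by rewrite -mem_enum mem_nth // -cardE.
  have [_ ->] := pr_ok (X2 _ eX).
  by move=> _ ->.
move=> eX.
have ilt : index e (enum X) < M.
  by apply: leq_trans XM; rewrite cardE index_mem mem_enum.
have ilX : index e (enum X) < #|X| by rewrite cardE index_mem mem_enum.
exists (Ordinal ilt); rewrite ?inE ffunE /= ilX nth_index ?mem_enum //.
  by have [-> _] := pr_ok (X2 _ eX).
by have [_ ->] := pr_ok (X2 _ eX).
Qed.
End Extra.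

Section RealPart.

Lemma INR_expn m n : INR (m ^ n)%N = pow (INR m) n.
Proof.
elim: n => [|n IH]; first by rewrite expn0.
by rewrite expnS -multE mult_INR IH /=.
Qed.

Local Open Scope R_scope.

Lemma exp_INR_le n : exp (INR n) <= pow 3 n.
Proof.
elim: n => [|n IH]; first by rewrite /= exp_0; lra.
rewrite S_INR exp_plus /=.
have h1 := exp_le_3. have h0 := exp_pos (INR n). have h2 := exp_pos 1.
rewrite Rmult_comm; apply: Rmult_le_compat; lra.
Qed.

Lemma exp_mono x y : x <= y -> exp x <= exp y.
Proof.
move=> h; case: (Rle_lt_or_eq_dec _ _ h) => [/exp_increasing|->]; lra.
Qed.

Lemma powbound k j : (2 <= k)%N -> INR j * ln (INR k) <= INR k -> (k ^ j <= 3 ^ k)%N.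
Proof.
move=> k2 h; apply/leP; apply: INR_le; rewrite !INR_expn.
have k1 : 1 < INR k by apply: lt_1_INR; apply/ltP.
rewrite -Rpower_pow; last lra.
replace (INR 3) with 3 by (simpl; lra).
rewrite /Rpower; apply: (Rle_trans _ (exp (INR k))); [exact: exp_mono|exact: exp_INR_le].
Qed.

Lemma edge_real k m : (2 <= k)%N ->
  INR m <= INR (k - 1) + INR k / ln (INR k) ->
  INR (m - (k - 1)) * ln (INR k) <= INR k.
Proof.
move=> k2 h.
have k1 : 1 < INR k by apply: lt_1_INR; apply/ltP.
have lk : 0 < ln (INR k) by rewrite -ln_1; apply: ln_increasing; lra.
case: (leqP m (k - 1)) => mk.
  have -> : (m - (k - 1) = 0)%N by apply/eqP; rewrite subn_eq0.
  rewrite /= Rmult_0_l; lra.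
rewrite -minusE minus_INR; last by apply/leP; rewrite minusE ltnW.
rewrite minusE.
have e : INR k / ln (INR k) * ln (INR k) = INR k by field; lra.
have : (INR m - INR (k - 1)) * ln (INR k) <= INR k / ln (INR k) * ln (INR k).
  apply: Rmult_le_compat_r; lra.
lra.
Qed.

End RealPart.



Definition decode n M (c : {set 'I_(n + n).+2} * {ffun 'I_M -> 'I_n.+1 * 'I_n.+1}) : graph n.+1 :=
  tree c.1 :|: extra c.2.

Lemma code_exists n M (G : graph n.+1) : good G ->
  (forall G : graph n.+1, good G -> #|G| - n <= M) ->
  exists c : {set 'I_(n + n).+2} * {ffun 'I_M -> 'I_n.+1 * 'I_n.+1},
    [set H | isob G H] = [set H | isob (decode c) H].
Proof.
move=> gG HM; have /and3P [sG cG _] := gG.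
have [s [p [par mono]]] := canon cG.
pose D := act s G.
have par' : forall j, 0 < j < n.+1 -> p j < j by move=> j /par [].
have treeD : tree (S0 n p) \subset D.
  rewrite tree_S0 //; apply/subsetP => e /imsetP [j j0 ->].
  rewrite nz in j0.
  by have := par j; rewrite j0 ltn_ord => /(_ isT) [_]; rewrite inord_val.
have cardD : #|D| = #|G|.
  by rewrite /D /act card_imset //; apply: imset_inj; exact: perm_inj.
have D2 : forall e, e \in D -> #|e| = 2.
  move=> e /imsetP [e0 e0G ->]; rewrite card_imset; last exact: perm_inj.
  by apply/eqP; move/forallP: sG => /(_ e0) /implyP; apply.
pose X := D :\: tree (S0 n p).
have XM : #|X| <= M.
  by rewrite cardsDS // cardD card_tree_S0 //; apply: HM.
have X2 : forall e, e \in X -> #|e| = 2 by move=> e; rewrite inE => /andP [_ /D2].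
have [t tX] := extra_exists X2 XM.
exists (S0 n p, t).
have -> : decode (S0 n p, t) = D.
  rewrite /decode /= tX; apply/setP => e; rewrite !inE.
  case: (boolP (e \in tree _)) => h //=.
  by rewrite (subsetP treeD _ h).
by apply: isob_class; apply/isobP; exists s.
Qed.

Lemma card_sets (T : finType) : #|{: {set T}}| = 2 ^ #|T|.
Proof. by rewrite -[in RHS]cardsT -card_powerset powersetT cardsT. Qed.

Theorem mainTheorem6 (k : nat) (hk : (1 <= k)%N) :
  (num_unlabeled_good k < 100 ^ k)%N.
Proof.
case: k hk => [//|n] _.
pose M := \max_(G : graph n.+1 | good G) (#|G| - n).
have HM : forall G : graph n.+1, good G -> #|G| - n <= M.
  by move=> G gG; apply: (leq_bigmax_cond (F := fun G : graph n.+1 => #|G| - n)).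
have HB : n.+1 ^ M <= 3 ^ n.+1.
  case: n => [|n] in M HM *; first by rewrite exp1n expn_gt0.
  case: (posnP #|[pred G : graph n.+2 | good G]|) => [c0|cpos].
    have -> : M = 0.
      rewrite /M big_pred0 // => G; have := card0_eq c0 G; by rewrite inE.
    by rewrite expn0 expn_gt0.
  have [G0 gG0 eqM] := eq_bigmax_cond (fun G : graph n.+2 => #|G| - n.+1) cpos.
  rewrite /M eqM; apply: powbound => //.
  have /and3P [_ _] := gG0; rewrite /edge_bound_ok /=.
  case: Rle_dec => // h _.
  by have := @edge_real n.+2 #|G0| isT h; rewrite subn1.
pose code := ({set 'I_(n + n).+2} * {ffun 'I_M -> 'I_n.+1 * 'I_n.+1})%type.
have le1 : num_unlabeled_good n.+1 <= #|{: code}|.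
  rewrite /num_unlabeled_good.
  apply: (@leq_trans #|[set [set H | isob (decode c) H] | c : code]|); last first.
    exact: leq_imset_card.
  apply: subset_leq_card; apply/subsetP => C /imsetP [G gG ->].
  have [c ->] := code_exists gG HM.
  by apply/imsetP; exists c.
apply: leq_ltn_trans le1 _.
rewrite card_prod card_sets card_ffun card_prod !card_ord.
have -> : (n + n).+2 = 2 * n.+1 by lia.
rewrite expnM expnMn.
apply: (@leq_ltn_trans ((2 ^ 2) ^ n.+1 * (3 ^ n.+1 * 3 ^ n.+1))).
  by rewrite leq_mul2l leq_mul // orbT.
rewrite -!expnMn ltn_exp2r //.
Qed.
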